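(* Let $\beta_1,\dots,\beta_{14}$ be a basis of $iD$ with $\operatorname{Tr}(\beta_a\beta_b)=\frac12\delta_{ab}$, where $D\subset\mathfrak{so}(7)$ is the derivation algebra of the octonions acting on the imaginary octonions $\operatorname{Im}(\mathbb O)\cong\mathbb R^7$. If $v\in\mathbb R^{14}$ is such that $\frac17(\mathbf 1_7+\sum_iv_i\beta_i)$ is a density matrix, then $|v|^2\le 8(10-\sqrt{65})$; in particular $|v|\le 3.93$.
   Context: A density matrix is a positive semidefinite Hermitian matrix of trace 1. The $\beta_i$ are Hermitian $7\times7$ matrices spanning $i$ times the 7-dimensional fundamental representation of $\mathfrak g_2$. *)

(* Defs.v *)
From HB Require Import structures.
From mathcomp Require Import all_boot all_order all_algebra.
From mathcomp Require Import complex.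
Set Implicit Arguments. Unset Strict Implicit. Unset Printing Implicit Defensive.
Import Order.TTheory GRing.Theory Num.Theory.
Local Open Scope ring_scope.

Section Octonions.
Variable R : rcfType.

(* Fano-plane convention: lines {t, t+1, t+3} (mod 7), e_t e_(t+1) = e_(t+3). *)
Definition fano_line (a b c : nat) : bool :=
  ((b == (a + 1) %% 7) && (c == (a + 3) %% 7))%N.
Definition fano_pos (i j k : 'I_7) : bool :=
  [|| fano_line i j k, fano_line j k i | fano_line k i j].
Definition oct_eps (i j k : 'I_7) : R :=
  if fano_pos i j k then 1 else if fano_pos j i k then -1 else 0.

(* Octonions O = R (+) Im(O), Im(O) = R^7 as column vectors *)
Definition oct := (R * 'cV[R]_7)%type.

Definition im_dot (u w : 'cV[R]_7) : R := \sum_i u i 0 * w i 0.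
Definition im_cross (u w : 'cV[R]_7) : 'cV[R]_7 :=
  \col_k \sum_i \sum_j oct_eps i j k * u i 0 * w j 0.

Definition oct_mul (x y : oct) : oct :=
  (x.1 * y.1 - im_dot x.2 y.2, x.1 *: y.2 + y.1 *: x.2 + im_cross x.2 y.2).

Definition oct_ext (A : 'M[R]_7) (x : oct) : oct := (0, A *m x.2).

Definition is_oct_der (A : 'M[R]_7) : Prop :=
  forall x y : oct,
    oct_ext A (oct_mul x y) = oct_mul (oct_ext A x) y + oct_mul x (oct_ext A y).

End Octonions.

Local Open Scope complex_scope.
Definition cR (R : rcfType) (x : R) : R[i] := x%:C.
Definition iC (R : rcfType) : R[i] := 'i.
Local Close Scope complex_scope.

Section Density.
Variable C : numClosedFieldType.
Definition adjmx n (A : 'M[C]_n) : 'M[C]_n := (map_mx Num.conj A)^T.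
Definition hermmx n (A : 'M[C]_n) : Prop := adjmx A = A.
Definition psdmx n (A : 'M[C]_n) : Prop :=
  hermmx A /\ forall x : 'cV[C]_n, 0 <= ((map_mx Num.conj x)^T *m A *m x) 0 0.
Definition density_mx n (A : 'M[C]_n) : Prop := psdmx A /\ \tr A = 1.
End Density.

(* Main.v *)
Require Import Defs.
From HB Require Import structures.
From mathcomp Require Import all_boot all_order all_algebra.
From mathcomp Require Import complex.
From mathcomp Require Import ring lra.
Import Order.TTheory GRing.Theory Num.Theory.
Local Open Scope ring_scope.

Notation CRe := complex.Re.
Notation CIm := complex.Im.
Notation Cx := complex.Complex.

Section H.
Context {R : rcfType}.
Lemma ReM (a b c d : R) : CRe (Cx a b * Cx c d) = a * c - b * d. Proof. by []. Qed.
Lemma ImM (a b c d : R) : CIm (Cx a b * Cx c d) = a * d + b * c. Proof. by []. Qed.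
Lemma ReD (x y : R[i]) : CRe (x + y) = CRe x + CRe y. Proof. by case: x; case: y. Qed.
Lemma ImD (x y : R[i]) : CIm (x + y) = CIm x + CIm y. Proof. by case: x; case: y. Qed.
Lemma Re_sum (I : Type) (r : seq I) (P : pred I) (F : I -> R[i]) :
  CRe (\sum_(i <- r | P i) F i) = \sum_(i <- r | P i) CRe (F i).
Proof. exact: (big_morph _ ReD). Qed.
Lemma Im_sum (I : Type) (r : seq I) (P : pred I) (F : I -> R[i]) :
  CIm (\sum_(i <- r | P i) F i) = \sum_(i <- r | P i) CIm (F i).
Proof. exact: (big_morph _ ImD). Qed.
Lemma cRE (x : R) : cR x = Cx x 0. Proof. by []. Qed.
Lemma iCE : iC R = Cx 0 1. Proof. by []. Qed.
Lemma ConjE (x : R[i]) : Num.conj x = Cx (CRe x) (- CIm x). Proof. by case: x. Qed.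
Lemma CxE (x : R[i]) : x = Cx (CRe x) (CIm x). Proof. by case: x. Qed.
Lemma natCE (n : nat) : (n%:R : R[i]) = Cx n%:R 0.
Proof.
elim: n => [//|n IH]; rewrite -natr1 IH -natr1.
by rewrite -[LHS]/(Cx (n%:R + 1) (0 + 0)) addr0.
Qed.
End H.

Lemma sum_delta (R : ringType) (n : nat) (F : 'I_n -> R) (l : 'I_n) :
  \sum_k (k == l)%:R * F k = F l.
Proof.
rewrite (bigD1 l) //= eqxx mul1r big1 ?addr0 // => k /negbTE ->; by rewrite mul0r.
Qed.

Lemma mxtrace_sum (C : comRingType) (n : nat) (I : Type) (r : seq I) (P : pred I) (F : I -> 'M[C]_n) :
  \tr (\sum_(i <- r | P i) F i) = \sum_(i <- r | P i) \tr (F i).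
Proof. exact: (big_morph _ (@mxtraceD _ _) (mxtrace0 _ _)). Qed.

Lemma final_arith (R : rcfType) (s : R) : 0 <= s -> s <= 14%:R ->
  s <= 8%:R * (10%:R - Num.sqrt 65%:R) /\ Num.sqrt s <= 393%:R / 100%:R.
Proof.
move=> s0 s14.
have h1 : Num.sqrt (65%:R : R) <= 33%:R / 4%:R.
  have -> : (33%:R / 4%:R : R) = Num.sqrt ((33%:R / 4%:R) ^+ 2).
    by rewrite sqrtr_sqr ger0_norm // divr_ge0 // ler0n.
  rewrite ler_sqrt; last by rewrite sqr_ge0.
  rewrite expr_div_n -!natrX ler_pdivlMr ?ltr0n // -natrM ler_nat //.
split; first lra.
have -> : (393%:R / 100%:R : R) = Num.sqrt ((393%:R / 100%:R) ^+ 2).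
  by rewrite sqrtr_sqr ger0_norm // divr_ge0 // ler0n.
rewrite ler_sqrt; last by rewrite sqr_ge0.
rewrite expr_div_n -!natrX ler_pdivlMr ?ltr0n //.
lra.
Qed.

Lemma Re3 (R : rcfType) (a b c d e f : R) :
  CRe (Cx a b * Cx c d * Cx e f) = (a * c - b * d) * e - (a * d + b * c) * f.
Proof. by []. Qed.

Theorem mainTheorem18 (R : rcfType) (beta : 'I_14 -> 'M[R[i]]_7)
  (hin : forall a, exists2 A : 'M[R]_7, is_oct_der A &
           beta a = iC R *: map_mx (@cR R) A)
  (hspan : forall A : 'M[R]_7, is_oct_der A ->
           exists c : 'I_14 -> R,
             iC R *: map_mx (@cR R) A = \sum_a cR (c a) *: beta a)
  (horth : forall a b, \tr (beta a *m beta b) = (a == b)%:R / 2)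
  (v : 'I_14 -> R)
  (hrho : density_mx ((7%:R)^-1 *: (1%:M + \sum_a cR (v a) *: beta a))) :
  \sum_a v a ^+ 2 <= 8%:R * (10%:R - Num.sqrt 65%:R)
  /\ Num.sqrt (\sum_a v a ^+ 2) <= 393%:R / 100%:R.
Proof.
set X := \sum_a cR (v a) *: beta a in hrho.
have XE : forall j k, X j k = \sum_a cR (v a) * beta a j k.
  by move=> j k; rewrite /X summxE; apply: eq_bigr => a _; rewrite mxE.
have hReb : forall a j k, CRe (beta a j k) = 0.
  move=> a j k; case: (hin a) => A _ ->; rewrite !mxE iCE cRE ReM; ring.
have hReX : forall j k, CRe (X j k) = 0.
  move=> j k; rewrite XE Re_sum big1 // => a _.
  by rewrite (CxE (beta a j k)) hReb cRE ReM; ring.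
pose m j k := CIm (X j k).
have XmE : forall j k, X j k = Cx 0 (m j k).
  by move=> j k; rewrite (CxE (X j k)) hReX.
set r := (7 : R)^-1.
have r0 : 0 < r by rewrite invr_gt0 ltr0n.
case: hrho => [[hherm hpsd] _].
have rhoE : forall j k, (7%:R)^-1 * ((j == k)%:R + X j k) = Cx (r * (j == k)%:R) (r * m j k).
  move=> j k; rewrite XmE.
  have -> : (7%:R : R[i])^-1 = cR r by rewrite /cR fmorphV rmorph_nat.
  rewrite natCE cRE; simpc. by [].
have antisym : forall j k, m j k = - m k j.
  move=> j k; have := congr1 (fun M : 'M[R[i]]_7 => M j k) hherm.
  rewrite /adjmx !mxE rhoE rhoE ConjE /= => -[_ h].
  have : r * (m j k + m k j) = 0 by rewrite mulrDr -h; ring.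
  move/eqP; rewrite mulf_eq0 (negbTE (lt0r_neq0 r0)) /= addr_eq0 => /eqP //.
have mdiag : forall j, m j j = 0.
  by move=> j; have := antisym j j; lra.
have hcol : forall j, \sum_k m k j ^+ 2 <= 1.
  move=> j.
  pose x : 'cV[R[i]]_7 := \col_k Cx (m k j) (k == j)%:R.
  have := hpsd x; rewrite lecE => /andP [_].
  rewrite mxE Re_sum.
  under eq_bigr => l _ do rewrite mxE mulr_suml Re_sum.
  under eq_bigr => l _ do under eq_bigr => k _ do rewrite !mxE rhoE ConjE /=.
  set S := \sum_k m k j ^+ 2.
  have inner : forall l, \sum_k ((m k j * (r * (k == l)%:R) - 1 *- (k == j) * (r * m k l)) * m l j -
        (m k j * (r * m k l) + 1 *- (k == j) * (r * (k == l)%:R)) * (l == j)%:R)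
      = r * (m l j * m l j + (l == j)%:R * (l == j)%:R) + r * (m j l * m l j)
        - r * ((l == j)%:R * \sum_k m k j * m k l).
    move=> l.
    rewrite (eq_bigr (fun k => r * ((k == l)%:R * (m k j * m l j + (k == j)%:R * (l == j)%:R))
       + r * ((k == j)%:R * (m k l * m l j)) - r * ((l == j)%:R * (m k j * m k l)))); last first.
      by move=> k _; ring.
    rewrite sumrB big_split /= -!GRing.mulr_sumr !sum_delta.
    by [].
  under eq_bigr => l _ do rewrite inner.
  rewrite sumrB big_split /= -!GRing.mulr_sumr.
  rewrite big_split /= !sum_delta eqxx -[true%:R]/(1 : R).
  under [X in _ + r * X - _]eq_bigr => l _ do rewrite (antisym j l).
  have -> : \sum_l m l j * m l j = S by apply: eq_bigr => l _; rewrite expr2.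
  have -> : \sum_l - m l j * m l j = - S.
    by rewrite -sumrN; apply: eq_bigr => l _; rewrite expr2 mulNr.
  move=> h.
  have : 0 <= r * (1 - S) by lra.
  by rewrite pmulr_rge0 // subr_ge0.
have tr1 : CRe (\tr (X *m X)) = \sum_j \sum_k m j k ^+ 2.
  rewrite /mxtrace Re_sum; apply: eq_bigr => j _.
  rewrite mxE Re_sum; apply: eq_bigr => k _.
  rewrite !XmE ReM (antisym k j); ring.
have tr2 : \tr (X *m X) = \sum_a \sum_b cR (v a) * (cR (v b) * ((a == b)%:R / 2)).
  rewrite /X mulmx_suml mxtrace_sum; apply: eq_bigr => a _.
  rewrite -scalemxAl mxtraceZ mulmx_sumr mxtrace_sum GRing.mulr_sumr.
  apply: eq_bigr => b _; by rewrite -scalemxAr mxtraceZ horth.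
have tr3 : CRe (\tr (X *m X)) = \sum_a v a ^+ 2 / 2.
  rewrite tr2 Re_sum; apply: eq_bigr => a _; rewrite Re_sum.
  rewrite (eq_bigr (fun b => (b == a)%:R * (v a * v b / 2))); last first.
    move=> b _.
    have -> : ((a == b)%:R / 2 : R[i]) = cR ((a == b)%:R / 2).
      by rewrite /cR fmorph_div !rmorph_nat.
    rewrite /cR -!rmorphM /= eq_sym; ring.
  by rewrite sum_delta expr2; ring.
have hS : \sum_a v a ^+ 2 <= 14%:R.
  have -> : \sum_a v a ^+ 2 = 2 * \sum_j \sum_k m j k ^+ 2.
    rewrite -tr1 tr3 GRing.mulr_sumr; apply: eq_bigr => a _; by field.
  rewrite exchange_big /=.
  have : \sum_k \sum_j m j k ^+ 2 <= \sum_(k < 7) (1 : R).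
    by apply: ler_sum => k _; exact: hcol.
  rewrite sumr_const card_ord => h.
  have -> : (14%:R : R) = 2 * 7%:R by rewrite -natrM.
  by rewrite ler_pM2l // ltr0n.
apply: final_arith hS.
by apply: sumr_ge0 => a _; exact: sqr_ge0.
Qed.
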